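(* Let $A$ be a monoid and let $\mathfrak{c}=(c_1,c_2,\dots)$ be an infinite sequence of integers with $c_i\ge2$ for all $i$. Then (1) the natural map $A^{\mathfrak{c}}\to(A_{\mathrm{red}})^{\mathfrak{c}}$ is an isomorphism; (2) if $A$ is pc, then the natural map $A^{\mathfrak{c}}\to(A_{\mathrm{sn}})^{\mathfrak{c}}$ is an isomorphism.
   Context: A monoid is a pointed commutative monoid. $A_{\mathrm{red}}$ is $A$ modulo the congruence $a\sim b$ iff $a^n=b^n$ for all $n\gg0$. pc: isomorphic to $C/I$ with $C$ cancellative ($ac=bc,c\ne0\Rightarrow a=b$) and $I$ an ideal. Seminormal: reduced ($a^2=b^2,a^3=b^3\Rightarrow a=b$) and $x^3=y^2\Rightarrow x=z^2,y=z^3$ for some $z$. For pc $A$, $A_{\mathrm{sn}}$ is its seminormalization: the map to a seminormal monoid with $A_{\mathrm{red}}\to A_{\mathrm{sn}}$ injective and every $b\in A_{\mathrm{sn}}$ satisfying $b^n\in A_{\mathrm{red}}$ for all $n\gg0$. For $c\ge2$, $\theta_c:A\to A$, $a\mapsto a^c$, is the dilation, and $A^{\mathfrak{c}}=\mathrm{colim}\{A\xrightarrow{\theta_{c_1}}A\xrightarrow{\theta_{c_2}}\cdots\}$, similarly for $A_{\mathrm{red}}$ and $A_{\mathrm{sn}}$. *)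

(* Defs.v *)
From Stdlib Require Import Arith.

(** A "monoid" in the paper: a pointed commutative monoid, i.e. a commutative
    monoid (written multiplicatively, unit [one]) with an absorbing element [zero]. *)
Record Monoid := {
  car :> Type;
  mul : car -> car -> car;
  one : car;
  zero : car;
  mulA : forall x y z, mul x (mul y z) = mul (mul x y) z;
  mulC : forall x y, mul x y = mul y x;
  mul1m : forall x, mul one x = x;
  mul0m : forall x, mul zero x = zero
}.

Arguments mul {m} _ _.
Arguments one {m}.
Arguments zero {m}.

Fixpoint mpow {M : Monoid} (a : M) (n : nat) : M :=
  match n with
  | O => one
  | S k => mul a (mpow a k)
  end.

Definition is_hom {M N : Monoid} (f : M -> N) : Prop :=
  (forall x y, f (mul x y) = mul (f x) (f y)) /\ f one = one /\ f zero = zero.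

Definition red_equiv {M : Monoid} (a b : M) : Prop :=
  exists N, forall n, N <= n -> mpow a n = mpow b n.

(** (R, q) is A_red: q : A -> R is a surjective homomorphism whose fibres
    are exactly the classes of [red_equiv], i.e. R = A/~ . *)
Definition is_reduction (A R : Monoid) (q : A -> R) : Prop :=
  is_hom q /\ (forall r : R, exists a, q a = r) /\
  (forall a b, q a = q b <-> red_equiv a b).

Definition cancellative (C : Monoid) : Prop :=
  forall a b c : C, c <> zero -> mul a c = mul b c -> a = b.

Definition is_ideal (C : Monoid) (I : C -> Prop) : Prop :=
  I zero /\ forall x y : C, I x -> I (mul x y).

(** pc: A is isomorphic to the Rees quotient C/I (I collapsed to 0) with C
    cancellative; equivalently there is a surjective hom C -> A whose fibres
    are the classes of C/I. *)
Definition pc (A : Monoid) : Prop :=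
  exists (C : Monoid) (I : C -> Prop) (p : C -> A),
    cancellative C /\ is_ideal C I /\ is_hom p /\
    (forall a : A, exists x, p x = a) /\
    (forall x y, p x = p y <-> (x = y \/ (I x /\ I y))).

Definition reduced (M : Monoid) : Prop :=
  forall a b : M, mpow a 2 = mpow b 2 -> mpow a 3 = mpow b 3 -> a = b.

Definition seminormal (M : Monoid) : Prop :=
  reduced M /\
  forall x y : M, mpow x 3 = mpow y 2 -> exists z, x = mpow z 2 /\ y = mpow z 3.

(** (S, phi) is the seminormalization A_sn of A: S seminormal, the induced map
    A_red -> S is well defined and injective (phi a = phi b iff a ~ b), and every
    b in S has b^n in (the image of) A_red for all n >> 0. *)
Definition is_seminormalization (A S : Monoid) (phi : A -> S) : Prop :=
  seminormal S /\ is_hom phi /\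
  (forall a b, phi a = phi b <-> red_equiv a b) /\
  (forall b : S, exists N, forall n, N <= n -> exists a, phi a = mpow b n).

(** Sequential colimit M^c = colim (M --theta_{c 0}--> M --theta_{c 1}--> ...),
    theta_c(a) = a^c.  An element is represented by (i, a): a in the i-th copy.
    [trans c i n a] is the image of a (in copy i) in copy i+n. *)
Fixpoint trans {M : Monoid} (c : nat -> nat) (i n : nat) (a : M) : M :=
  match n with
  | O => a
  | S k => mpow (trans c i k a) (c (i + k))
  end.

Definition colim_eq {M : Monoid} (c : nat -> nat) (x y : nat * M) : Prop :=
  exists k, fst x <= k /\ fst y <= k /\
    trans c (fst x) (k - fst x) (snd x) = trans c (fst y) (k - fst y) (snd y).

(** The map M^c -> N^c induced by f : M -> N is (i, a) |-> (i, f a).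
    It is an isomorphism (it is always a monoid hom of the colimits when f is
    a hom) iff it is a bijection of the colimits, i.e. injective and surjective
    modulo [colim_eq]. *)
Definition colim_map_bijective {M N : Monoid} (c : nat -> nat) (f : M -> N) : Prop :=
  (forall x y : nat * M,
     colim_eq c (fst x, f (snd x)) (fst y, f (snd y)) -> colim_eq c x y) /\
  (forall y : nat * N, exists x : nat * M, colim_eq c (fst x, f (snd x)) y).

(* Main.v *)
Require Import Defs.
From Stdlib Require Import Arith Lia.

Section S.
Context {M : Monoid}.

Lemma mpow_add (a : M) n m : mpow a (n + m) = mul (mpow a n) (mpow a m).
Proof.
  induction n; simpl. now rewrite mul1m. now rewrite IHn, mulA.
Qed.

Lemma mpow_mulx (x y : M) n : mpow (mul x y) n = mul (mpow x n) (mpow y n).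
Proof.
  induction n; simpl. now rewrite mul1m.
  rewrite IHn. rewrite !mulA. f_equal.
  rewrite <- !mulA. f_equal. apply mulC.
Qed.

Lemma mpow_mul (a : M) n m : mpow a (n * m) = mpow (mpow a n) m.
Proof.
  induction n; simpl.
  - induction m; simpl; auto. now rewrite <- IHm, mul1m.
  - rewrite mpow_add, IHn. now rewrite mpow_mulx.
Qed.

Fixpoint P (c : nat -> nat) (i n : nat) : nat :=
  match n with O => 1 | S k => P c i k * c (i + k) end.

Lemma trans_pow c i n (a : M) : trans c i n a = mpow a (P c i n).
Proof.
  induction n; simpl. rewrite mulC; apply eq_sym; apply mul1m.
  rewrite IHn. now rewrite mpow_mul.
Qed.

Lemma P_ge c (hc : forall i, 2 <= c i) i n : 1 <= P c i n /\ n <= P c i n.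
Proof.
  induction n; simpl. lia.
  destruct IHn. specialize (hc (i+n)).
  assert (P c i n * 2 <= P c i n * c (i+n)) by (apply Nat.mul_le_mono_l; lia). lia.
Qed.

Lemma trans_add c i n m (a : M) :
  trans c i (n + m) a = trans c (i + n) m (trans c i n a).
Proof.
  induction m; simpl. now rewrite Nat.add_0_r.
  rewrite Nat.add_succ_r. simpl. rewrite IHm. now rewrite Nat.add_assoc.
Qed.
End S.

Lemma hom_pow {M N : Monoid} (f : M -> N) (hf : is_hom f) a n :
  f (mpow a n) = mpow (f a) n.
Proof.
  destruct hf as [h1 [h2 _]]. induction n; simpl; auto. now rewrite h1, IHn.
Qed.

Lemma hom_trans {M N : Monoid} (f : M -> N) (hf : is_hom f) c i n a :
  f (trans c i n a) = trans c i n (f a).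
Proof.
  induction n; simpl; auto. now rewrite hom_pow, IHn.
Qed.

Lemma general {M N : Monoid} (c : nat -> nat) (hc : forall i, 2 <= c i)
  (f : M -> N) (hf : is_hom f) (hk : forall a b, f a = f b <-> red_equiv a b)
  (hs : forall b : N, exists K, forall n, K <= n -> exists a, f a = mpow b n) :
  colim_map_bijective c f.
Proof.
  split.
  - intros [i a] [j b] [k [hi [hj he]]]; simpl in *.
    rewrite <- !(hom_trans f hf) in he. apply hk in he as [K hK].
    exists (k + K); simpl; split; [lia|split; [lia|]].
    replace (k + K - i) with ((k - i) + K) by lia.
    replace (k + K - j) with ((k - j) + K) by lia.
    rewrite !trans_add. replace (i + (k - i)) with k by lia.
    replace (j + (k - j)) with k by lia.
    rewrite !(trans_pow c k K). apply hK. apply (P_ge c hc).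
  - intros [i s]. destruct (hs s) as [K hK].
    destruct (hK (P c i K)) as [a ha]. apply (P_ge c hc).
    exists (i + K, a); simpl. exists (i + K); simpl. split; [lia|split; [lia|]].
    rewrite Nat.sub_diag. simpl. replace (i + K - i) with K by lia.
    now rewrite trans_pow.
Qed.

Theorem lemma3p5 (A : Monoid) (c : nat -> nat) (hc : forall i, 2 <= c i) :
  (forall (R : Monoid) (q : A -> R), is_reduction A R q -> colim_map_bijective c q) /\
  (pc A -> forall (S : Monoid) (phi : A -> S),
     is_seminormalization A S phi -> colim_map_bijective c phi).
Proof.
  split.
  - intros R q [hq [hs hk]]. apply general; auto.
    intros b. destruct (hs b) as [a ha]. exists 0. intros n _.
    exists (mpow a n). now rewrite (hom_pow q hq), ha.
  - intros _ S phi [_ [hp [hk hs]]]. now apply general.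
Qed.
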